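(* Let $0<\mu<1/2$ be such that for every $\rho>0$ the spiral $t\mapsto(\rho\cos t,\rho\sin t,\mu\rho t)$ is self-expanded, and let $\alpha=\arccos(1/\sqrt5)$. There exists an integer $N\ge2$ such that for every $r_0>0$, setting $r=Nr_0$ and $\gamma(t)=(r\cos t,r\sin t,\mu rt)$, we have $C(\tau,\alpha)\cap\mathrm{Cyl}(r_0)=\emptyset$ for all $\tau\ge0$, where $\mathrm{Cyl}(r_0)=\{(x,y,z)\in\mathbb{R}^3:x^2+y^2=r_0^2,\ z\in\mathbb{R}\}$.
   Context: $\mathbb{R}^3$ carries the Euclidean inner product $\langle\cdot,\cdot\rangle$ and norm $\|\cdot\|$. A curve is self-expanded if for all $t_1\le t_2\le t_3$: $\|\gamma(t_1)-\gamma(t_2)\|\le\|\gamma(t_1)-\gamma(t_3)\|$. For $v\in\mathbb{S}^2$ and $\alpha\in[0,\pi)$, $C(v,\alpha)=\{u:\langle u,v\rangle>\|u\|\cos\alpha\}\cup\{0\}$, and $C(\tau,\alpha)=\gamma(\tau)+C\big(\gamma'(\tau)/\|\gamma'(\tau)\|,\alpha\big)$. *)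

(* Defs.v *)
From Stdlib Require Import Reals Lra.
From Coquelicot Require Import Coquelicot.
Open Scope R_scope.

Definition vec3 : Type := (R * R * R)%type.
Definition mk3 (x y z : R) : vec3 := (x, y, z).
Definition vx (u : vec3) : R := fst (fst u).
Definition vy (u : vec3) : R := snd (fst u).
Definition vz (u : vec3) : R := snd u.
Definition vadd (u v : vec3) : vec3 := mk3 (vx u + vx v) (vy u + vy v) (vz u + vz v).
Definition vsub (u v : vec3) : vec3 := mk3 (vx u - vx v) (vy u - vy v) (vz u - vz v).
Definition vscale (a : R) (u : vec3) : vec3 := mk3 (a * vx u) (a * vy u) (a * vz u).
Definition vzero : vec3 := mk3 0 0 0.
Definition dot (u v : vec3) : R := vx u * vx v + vy u * vy v + vz u * vz v.
Definition vnorm (u : vec3) : R := sqrt (dot u u).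

Definition curve := R -> vec3.

Definition self_expanded (g : curve) : Prop :=
  forall t1 t2 t3 : R, t1 <= t2 -> t2 <= t3 ->
    vnorm (vsub (g t1) (g t2)) <= vnorm (vsub (g t1) (g t3)).

Definition dcurve (g : curve) (t : R) : vec3 :=
  mk3 (Derive (fun s => vx (g s)) t) (Derive (fun s => vy (g s)) t)
      (Derive (fun s => vz (g s)) t).

Definition in_cone (v : vec3) (alpha : R) (u : vec3) : Prop :=
  dot u v > vnorm u * cos alpha \/ u = vzero.

Definition in_Ctau (g : curve) (tau alpha : R) (p : vec3) : Prop :=
  exists u : vec3,
    in_cone (vscale (/ vnorm (dcurve g tau)) (dcurve g tau)) alpha u /\
    p = vadd (g tau) u.

Definition in_Cyl (r0 : R) (p : vec3) : Prop :=
  vx p ^ 2 + vy p ^ 2 = r0 ^ 2.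

Definition spiral (rho mu : R) : curve :=
  fun t => mk3 (rho * cos t) (rho * sin t) (mu * rho * t).

(* Main.v *)
Require Import Defs.
From Stdlib Require Import Reals Lra Lia.
From Coquelicot Require Import Coquelicot.
Open Scope R_scope.

Lemma dspiral (r mu t : R) :
  dcurve (spiral r mu) t = mk3 (- r * sin t) (r * cos t) (mu * r).
Proof.
  unfold dcurve, spiral, vx, vy, vz, mk3; simpl; f_equal; [f_equal|]; apply is_derive_unique; auto_derive; auto; ring.
Qed.

Lemma key (mu r r0 a b c : R) :
  0 < mu < 1/2 -> 0 < r0 ->
  (r - r0) ^ 2 >= (4 + 25 / (1 - 4 * mu ^ 2)) * r0 ^ 2 ->
  r0 < r ->
  (r + a) ^ 2 + b ^ 2 = r0 ^ 2 ->
  5 * (b + mu * c) ^ 2 <= (1 + mu ^ 2) * (a ^ 2 + b ^ 2 + c ^ 2).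
Proof.
  intros Hmu Hr0 HN Hr Hc.
  set (K := 1 - 4 * mu ^ 2).
  assert (HK : 0 < K) by (unfold K; nra).
  fold K in HN.
  assert (Hb : b ^ 2 <= r0 ^ 2) by (pose proof (pow2_ge_0 (r+a)); lra).
  assert (Ha : r + a <= r0) by (pose proof (pow2_ge_0 b); nra).
  assert (Ha2 : (r - r0) ^ 2 <= a ^ 2) by (assert (0 <= (-a - (r-r0)) * (-a + (r-r0))) by (apply Rmult_le_pos; lra); nra).
  assert (H1 : K * c ^ 2 - 10 * mu * b * c >= - (25 * mu ^ 2 * b ^ 2) / K).
  { assert (0 <= K * (c - 5 * mu * b / K) ^ 2) by (apply Rmult_le_pos; [lra | apply pow2_ge_0]).
    replace (K * (c - 5 * mu * b / K) ^ 2) with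
      (K * c ^ 2 - 10 * mu * b * c + 25 * mu ^ 2 * b ^ 2 / K) in H by (field; lra).
    unfold Rdiv in *; lra. }
  assert (H2 : 25 * mu ^ 2 * b ^ 2 / K <= 25 / K * r0 ^ 2).
  { replace (25 / K * r0 ^ 2) with (25 * r0 ^ 2 / K) by (field; lra).
    unfold Rdiv. apply Rmult_le_compat_r. left; apply Rinv_0_lt_compat; lra.
    assert (mu ^ 2 <= 1) by nra. assert (0 <= b ^ 2) by apply pow2_ge_0. nra. }
  assert (H3 : 0 <= 25 / K) by (unfold Rdiv; apply Rmult_le_pos; [lra| left; apply Rinv_0_lt_compat; lra]).
  assert (E : (1 + mu ^ 2) * (a ^ 2 + b ^ 2 + c ^ 2) - 5 * (b + mu * c) ^ 2 =
     (1 + mu^2) * a^2 + (mu^2 - 4) * b^2 + (K * c ^ 2 - 10 * mu * b * c)) by (unfold K; ring).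
  unfold Rdiv in *.
  nra.
Qed.

Theorem lemma4p6 (mu : R) :
  0 < mu < 1 / 2 ->
  (forall rho : R, 0 < rho -> self_expanded (spiral rho mu)) ->
  exists N : nat, (2 <= N)%nat /\
    forall r0 : R, 0 < r0 ->
    forall tau : R, 0 <= tau ->
    forall p : vec3,
      ~ (in_Ctau (spiral (INR N * r0) mu) tau (acos (1 / sqrt 5)) p /\ in_Cyl r0 p).
Proof.
  intros Hmu _.
  set (K := 1 - 4 * mu ^ 2).
  assert (HK : 0 < K) by (unfold K; nra).
  set (M := 4 + 25 / K).
  assert (HM : 4 <= M).
  { unfold M. assert (0 <= 25 / K) by (unfold Rdiv; apply Rmult_le_pos; [lra| left; apply Rinv_0_lt_compat; lra]). lra. }
  destruct (INR_unbounded (M + 1)) as [N HN].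
  assert (HN2 : (2 <= N)%nat).
  { destruct N as [|[|N]]; simpl in HN; try lra. lia. }
  exists N; split; [exact HN2|].
  intros r0 Hr0 tau Htau p [[u [Hcone Hp]] Hcyl].
  set (r := INR N * r0) in *.
  assert (Hr : r0 < r).
  { unfold r. nra. }
  assert (HrN : (r - r0) ^ 2 >= M * r0 ^ 2).
  { replace (r - r0) with ((INR N - 1) * r0) by (unfold r; ring).
    assert (M <= (INR N - 1) ^ 2) by nra.
    replace (((INR N - 1) * r0) ^ 2) with ((INR N - 1) ^ 2 * r0 ^ 2) by ring. assert (0 <= r0 ^ 2) by apply pow2_ge_0. nra. }
  rewrite dspiral in Hcone.
  pose proof (sin2_cos2 tau) as Hsc. unfold Rsqr in Hsc.
  set (cs := cos tau) in *. set (sn := sin tau) in *.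
  destruct u as [[ux uy] uz].
  unfold in_Cyl in Hcyl. rewrite Hp in Hcyl.
  unfold vadd, spiral, vx, vy, vz, mk3 in Hcyl; cbn [fst snd] in Hcyl. fold cs sn in Hcyl.
  destruct Hcone as [Hcone | Hz].
  2:{ unfold vzero, mk3 in Hz. injection Hz as -> ->.
      assert (r ^ 2 = r0 ^ 2).
      { rewrite <- Hcyl. replace (r * cs + 0) with (r * cs) by ring.
        replace (r * sn + 0) with (r * sn) by ring. nra. }
      nra. }
  set (a := ux * cs + uy * sn).
  set (b := - ux * sn + uy * cs).
  assert (Hkey := key mu r r0 a b uz Hmu Hr0 HrN Hr).
  assert (Hab : a ^ 2 + b ^ 2 = ux ^ 2 + uy ^ 2).
  { transitivity ((ux ^ 2 + uy ^ 2) * (sn * sn + cs * cs)).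
    unfold a, b; ring. rewrite Hsc; ring. }
  assert (Hcyl' : (r + a) ^ 2 + b ^ 2 = r0 ^ 2).
  { rewrite <- Hcyl.
    transitivity (r ^ 2 * (sn * sn + cs * cs) + 2 * r * a + (a ^ 2 + b ^ 2)).
    rewrite Hsc; ring. rewrite Hab. unfold a; ring. }
  specialize (Hkey Hcyl').
  rewrite cos_acos in Hcone.
  2:{ assert (1 <= sqrt 5).
      { rewrite <- sqrt_1. apply sqrt_le_1_alt. lra. }
      split.
      - assert (0 <= 1 / sqrt 5) by (unfold Rdiv; apply Rmult_le_pos; [lra| left; apply Rinv_0_lt_compat; lra]). lra.
      - unfold Rdiv. rewrite Rmult_1_l. rewrite <- Rinv_1. apply Rinv_le_contravar; lra. }
  set (S := sqrt (1 + mu ^ 2)).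
  assert (HS : 0 < S) by (apply sqrt_lt_R0; nra).
  assert (HS2 : S * S = 1 + mu ^ 2) by (apply sqrt_sqrt; nra).
  assert (Hr0' : 0 < r) by lra.
  assert (HD : vnorm (mk3 (- r * sn) (r * cs) (mu * r)) = r * S).
  { unfold vnorm, dot, vx, vy, vz, mk3; simpl.
    replace (- r * sn * (- r * sn) + r * cs * (r * cs) + mu * r * (mu * r))
      with ((r * S) * (r * S)).
    apply sqrt_square. nra.
    transitivity (r * r * (S * S)). ring. rewrite HS2.
    transitivity (r * r * (sn * sn + cs * cs + mu ^ 2)). rewrite Hsc; ring. ring. }
  rewrite HD in Hcone.
  set (W := b + mu * uz).
  assert (HW : dot (ux, uy, uz) (vscale (/ (r * S)) (mk3 (- r * sn) (r * cs) (mu * r))) = W / S).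
  { unfold dot, vscale, vx, vy, vz, mk3, W, b; simpl. field. split; lra. }
  rewrite HW in Hcone.
  set (U := vnorm (ux, uy, uz)) in *.
  assert (HU0 : 0 <= U) by apply sqrt_pos.
  assert (HU2 : U * U = a ^ 2 + b ^ 2 + uz ^ 2).
  { unfold U, vnorm. rewrite sqrt_sqrt. unfold dot, vx, vy, vz; simpl.
    transitivity ((a ^ 2 + b ^ 2) + uz ^ 2). rewrite Hab; ring. ring.
    unfold dot, vx, vy, vz; simpl. nra. }
  set (F := sqrt 5).
  assert (HF : 0 < F) by (apply sqrt_lt_R0; lra).
  assert (HF2 : F * F = 5) by (apply sqrt_sqrt; lra).
  assert (Hc2 : W * F > U * S).
  { assert (W / S * (S * F) > U * (1 / F) * (S * F)).
    { apply Rmult_gt_compat_r. nra. exact Hcone. }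
    replace (W / S * (S * F)) with (W * F) in H by (field; lra).
    replace (U * (1 / F) * (S * F)) with (U * S) in H by (field; lra).
    exact H. }
  assert (HUS : 0 <= U * S) by nra.
  assert ((U * S) * (U * S) < (W * F) * (W * F)) by nra.
  replace ((U * S) * (U * S)) with ((U * U) * (S * S)) in H by ring.
  replace ((W * F) * (W * F)) with ((W * W) * (F * F)) in H by ring.
  rewrite HU2, HS2, HF2 in H.
  unfold W in H. fold K in Hkey. nra.
Qed.
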